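(* Let $p$ be a prime, $e\ge1$, $G$ a finite abelian group of order $p^e$, and $R=\mathbf{Z}[G]$. Choose one representation $\rho$ in each equivalence class, and let $S=\bigoplus_\rho\mathbf{Z}[\omega_{k(\rho)}]$ (sum over the chosen representatives, $k(\rho)$ the level of $\rho$), with $R$ embedded in $S$ via $a\mapsto(j_\rho(a))_\rho$. Then the conductor of $S$ into $R$, i.e. the largest ideal $I$ of $S$ contained in $R$, is the ideal of $R$ generated by the elements $b_\rho$ for the chosen representatives $\rho$ (including $b_1$).
   Context: A representation is a group homomorphism $\rho\colon G\to\mathbf{C}^*$; its level is $k$ if $\rho(G)$ has $p^k$ elements. Two representations are equivalent if they have the same kernel. $\omega_k=\exp(2\pi i/p^k)$, $\omega=\omega_1$. For $\rho$ of level $k$, $j_\rho\colon\mathbf{Z}[G]\to\mathbf{Z}[\omega_k]$ is the ring homomorphism induced by $g\mapsto\rho(g)$. For $\rho$ of level $k>0$ set $b_\rho=\sum_{x\in G,\ \rho(x)=1}x-\sum_{\xi\in G,\ \rho(\xi)=\omega}\xi\in\mathbf{Z}[G]$; for the trivial representation $1$ set $b_1=\sum_{x\in G}x$. *)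

(* Defs.v *)
From HB Require Import structures.
From mathcomp Require Import all_boot all_order all_algebra all_fingroup all_field.
Set Implicit Arguments. Unset Strict Implicit. Unset Printing Implicit Defensive.
Import GRing.Theory Num.Theory.
Local Open Scope ring_scope.

(* omega_k = exp(2 pi i / p^k) in algC: (p^k).-root (-1) is the p^k-th root of
   -1 with minimal nonnegative argument, i.e. exp(i pi / p^k); its square is
   exp(2 pi i / p^k). *)
Definition omega (p k : nat) : algC := (((p ^ k)%N).-root (-1)) ^+ 2.

Definition inZomega (p k : nat) (x : algC) : Prop :=
  exists (m : nat) (c : 'I_m -> int), x = \sum_(i < m) (c i)%:~R * omega p k ^+ i.

(* a representation G -> C^* , G = the whole finite group type gT *)
Definition is_rep (gT : finGroupType) (rho : gT -> algC) : Prop :=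
  (forall x y : gT, rho (x * y)%g = rho x * rho y) /\ (forall x, rho x != 0).

Definition rker (gT : finGroupType) (rho : gT -> algC) : {set gT} :=
  [set g | rho g == 1].

Definition level (gT : finGroupType) (p : nat) (rho : gT -> algC) : nat :=
  logn p (size (undup [seq rho g | g : gT])).

Definition ZG (gT : finGroupType) := {ffun gT -> int}.

Definition zg_mul (gT : finGroupType) (a b : ZG gT) : ZG gT :=
  [ffun g => \sum_(h : gT) a h * b (h^-1 * g)%g].

Definition jrho (gT : finGroupType) (rho : gT -> algC) (a : ZG gT) : algC :=
  \sum_(g : gT) (a g)%:~R * rho g.

Definition brho (gT : finGroupType) (p : nat) (rho : gT -> algC) : ZG gT :=
  if level p rho == 0%N then [ffun _ => 1]
  else [ffun x => (rho x == 1)%:Z - (rho x == omega p 1)%:Z].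

Definition in_b_ideal (gT : finGroupType) (p n : nat) (reps : 'I_n -> gT -> algC)
  (a : ZG gT) : Prop :=
  exists r : 'I_n -> ZG gT,
    a = [ffun g => \sum_(i < n) zg_mul (r i) (brho p (reps i)) g].

(* S = (+)_rho Z[omega_{k(rho)}], elements are tuples indexed by 'I_n *)
Definition inS (gT : finGroupType) (p n : nat) (reps : 'I_n -> gT -> algC)
  (s : 'I_n -> algC) : Prop :=
  forall i, inZomega p (level p (reps i)) (s i).

Definition is_S_ideal (gT : finGroupType) (p n : nat) (reps : 'I_n -> gT -> algC)
  (I : ('I_n -> algC) -> Prop) : Prop :=
  [/\ forall s, I s -> inS p reps s,
      I (fun _ => 0),
      forall s t, I s -> I t -> I (fun i => s i + t i),
      forall s, I s -> I (fun i => - s i) &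
      forall s t, I s -> inS p reps t -> I (fun i => t i * s i)].

Definition in_R_image (gT : finGroupType) (n : nat) (reps : 'I_n -> gT -> algC)
  (s : 'I_n -> algC) : Prop :=
  exists a : ZG gT, forall i, s i = jrho (reps i) a.

(* Main.v *)
Require Import Defs.
From HB Require Import structures.
From mathcomp Require Import all_boot all_order all_algebra all_fingroup all_solvable all_field all_character.
From mathcomp Require Import ring.
Require Import Defs.
Import Order.TTheory GRing.Theory Num.Theory.
Local Open Scope ring_scope.

Lemma expr_gcd1 (x : algC) a b : (0 < b)%N -> x ^+ a = 1 -> x ^+ b = 1 ->
  x ^+ gcdn a b = 1.
Proof.
move=> b0 xa xb; have [d pd db] := prim_order_exists b0 xb.
apply/eqP; rewrite -(prim_order_dvd pd) dvdn_gcd db andbT.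
by rewrite (prim_order_dvd pd) xa.
Qed.

Lemma unit_conj (w : algC) n : (0 < n)%N -> w ^+ n = 1 -> w^* = w^-1.
Proof.
move=> n0 wn; have w0 : w != 0.
  apply/eqP => w0; move: wn; rewrite w0 expr0n gtn_eqF //= => /eqP.
  by rewrite eq_sym oner_eq0.
have nw : `|w| = 1.
  apply/eqP; rewrite -(pexpr_eq1 n0) ?normr_ge0 // -normrX wn normr1 //.
apply: (mulfI w0); rewrite divff // -normCK nw expr1n //.
Qed.

Lemma Re_le_root (n : nat) (y : algC) : (0 < n)%N -> y ^+ n = -1 ->
  'Re y <= 'Re (n.-root (-1)).
Proof.
move=> n0 yn; have := Creal_Im y; case/real_ge0P => [Iy|Iy].
  exact: rootC_Re_max.
rewrite -Re_conj; apply: rootC_Re_max => //.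
  by rewrite -rmorphXn /= yn rmorphN1.
by rewrite Im_conj oppr_ge0 ltW.
Qed.

Lemma prod_seqN (r : seq algC) (F : algC -> algC) :
  \prod_(w <- r) (- F w) = (-1) ^+ size r * \prod_(w <- r) F w.
Proof.
elim: r => [|a r IH]; first by rewrite !big_nil mul1r.
by rewrite !big_cons IH /= exprS; ring.
Qed.

Lemma prod_seqV (r : seq algC) (F : algC -> algC) :
  \prod_(w <- r) (F w)^-1 = (\prod_(w <- r) F w)^-1.
Proof.
elim: r => [|a r IH]; first by rewrite !big_nil invr1.
by rewrite !big_cons IH invfM.
Qed.

Lemma noprim p k : prime p ->
  (p ^ k.+1)%N.-root (-1) ^+ (2 * p ^ k) != (1 : algC).
Proof.
move=> pp; set n := (p ^ k.+1)%N; set z := n.-root (-1); set M := (p ^ k)%N.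
have p1 : (1 < p)%N by apply: prime_gt1.
have n1 : (1 < n)%N by rewrite /n -(expn0 p) ltn_exp2l // ltnS.
have n0 : (0 < n)%N by apply: ltnW.
have nM : n = (M * p)%N by rewrite /n expnSr.
have zn : z ^+ n = -1 by rewrite /z rootCK.
have N1 : (-1 : algC) != 1 by rewrite eq_sym -subr_eq0 opprK -(natrD _ 1 1) pnatr_eq0.
apply/negP => /eqP h.
have zM : z ^+ M = -1.
  have : (z ^+ M) ^+ 2 == 1 by rewrite -exprM mulnC h.
  rewrite sqrf_eq1 => /orP[/eqP zM1|/eqP //].
  by move: zn; rewrite nM exprM zM1 expr1n => /esym/eqP; rewrite (negbTE N1).
have podd : odd p.
  case: (even_prime pp) => // p2.
  move: zn; rewrite nM p2 exprM zM sqrrN expr1n.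
  by move/esym/eqP; rewrite (negbTE N1).
have z0 : z != 0 by apply/eqP => z0; move: zn; rewrite z0 expr0n gtn_eqF //= => /eqP; rewrite eq_sym oppr_eq0 oner_eq0.
have zu : z ^+ (n * 2) = 1 by rewrite exprM zn sqrrN expr1n.
have zc : z^* = z^-1 by apply: (@unit_conj z (n * 2)) zu; rewrite muln_gt0 n0.
have Mo : odd M by rewrite /M oddX podd orbT.
have zN1 : z != -1.
  apply/eqP => zm1; have : (z < 0) = false by apply: rootC_lt0.
  by rewrite zm1 ltrN10.
have z2 : z ^+ 2 != 1.
  apply: contra zN1 => /eqP z21; rewrite -zM -(expr_mod M z21).
  by rewrite modn2 Mo expr1.
set q := 'X^p - z%:P.
have p0 : (0 < p)%N by apply: ltnW.
have [r Dq] := closed_field_poly_normal q.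
rewrite lead_coefXnsubC // scale1r in Dq.
have rootw w : w \in r -> w ^+ p = z.
  move=> wr; have : root q w by rewrite Dq root_prod_XsubC.
  by rewrite /root /q !hornerE subr_eq0 => /eqP.
have sr : size r = p.
  have := size_XnsubC z p0; rewrite -/q Dq size_prod_XsubC; by case.
have wc w : w \in r -> w^* = w^-1.
  move=> wr; apply: (@unit_conj w (p * (2 * M))); first by rewrite !muln_gt0 p0 expn_gt0 p0.
  by rewrite exprM rootw.
have wn w : w \in r -> w ^+ n = -1 by move=> wr; rewrite nM mulnC exprM rootw.
have w0 w : w \in r -> w != 0.
  by move=> wr; apply/eqP => w0; move: (wn w wr); rewrite w0 expr0n gtn_eqF //= => /eqP; rewrite eq_sym oppr_eq0 oner_eq0.
have sgp : (-1) ^+ p = -1 :> algC by rewrite -signr_odd podd expr1.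
have Hq x : \prod_(w <- r) (x - w) = x ^+ p - z.
  have := congr1 (fun P => P.[x]) Dq; rewrite /= horner_prod /q !hornerE => ->.
  by apply: eq_bigr => w _; rewrite hornerXsubC.
have P0 : \prod_(w <- r) w = z.
  have := Hq 0; under eq_bigr do rewrite sub0r.
  rewrite prod_seqN sr sgp expr0n gtn_eqF // sub0r mulN1r.
  by move/(congr1 (fun x => - x)); rewrite !opprK.
have P1 : \prod_(w <- r) (w - z^-1) = - (z^-1 ^+ p - z).
  rewrite (eq_bigr (fun w => - (z^-1 - w))); last by move=> w _; rewrite opprB.
  by rewrite prod_seqN Hq sr sgp mulN1r.
have key : \prod_(w <- r) ((z + z^*) - (w + w^*)) = (z^+p + z^-p) - (z + z^-1).
  rewrite (eq_big_seq (fun w => (z - w) * (w - z^-1) * (w^-1))); last first.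
    move=> w wr; rewrite zc wc //; field; by rewrite w0.
  rewrite !big_split /= prod_seqV Hq P1 P0 exprVn; field.
  by rewrite z0 expf_neq0.
have two0 : (0 : algC) < 2%:R by rewrite ltr0n.
have fac w : w \in r -> 0 <= (z + z^*) - (w + w^*).
  move=> wr; have := @Re_le_root n _ n0 (wn w wr); rewrite -/z !ReE.
  by rewrite ler_pM2r ?invr_gt0 // subr_ge0.
have rhs : (z^+p + z^-p) - (z + z^-1) <= 0.
  have : (z^+p)^+n = -1 by rewrite -exprM mulnC exprM zn sgp.
  move/(@Re_le_root n _ n0); rewrite -/z !ReE ler_pM2r ?invr_gt0 //.
  by rewrite rmorphXn /= zc exprVn subr_le0.
have : \prod_(w <- r) ((z + z^*) - (w + w^*)) == 0.
  rewrite eq_le {1}key rhs /= big_seq; apply: prodr_ge0 => w /fac //.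
rewrite prodf_seq_eq0 => /hasP[w wr /= /eqP f0].
have : (w - z) * (w - z^-1) == 0.
  have -> : (w - z) * (w - z^-1) = - w * ((z + z^*) - (w + w^*)).
    rewrite zc wc //; field; by rewrite z0 w0.
  by rewrite f0 mulr0.
have pS : p = p.-1.+1 by rewrite prednK.
rewrite mulf_eq0 !subr_eq0 => /orP[] /eqP wz; have := rootw w wr; rewrite wz.
  move=> zp; have zp1 : z ^+ p.-1 = 1.
    by apply: (mulIf z0); rewrite mul1r -exprSr -pS.
  have := @expr_gcd1 z p.-1 (2 * M) _ zp1 h.
  rewrite Gauss_gcdl ?coprimeXr ?coprimePn // muln_gt0 expn_gt0 p0 => /(_ isT) zg.
  by move: z2; rewrite -(divnK (dvdn_gcdr p.-1 2)) mulnC exprM zg expr1n eqxx.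
move=> zp; have zp1 : z ^+ p.+1 = 1.
  by rewrite exprSr -{2}zp exprVn mulfV // expf_neq0.
have := @expr_gcd1 z p.+1 (2 * M) _ zp1 h.
rewrite Gauss_gcdl ?coprimeXr ?coprimeSn // muln_gt0 expn_gt0 p0 => /(_ isT) zg.
by move: z2; rewrite -(divnK (dvdn_gcdr p.+1 2)) mulnC exprM zg expr1n eqxx.
Qed.

Lemma omega_prim p k : prime p -> (p ^ k)%N.-primitive_root (omega p k).
Proof.
move=> pp; rewrite /omega; set n := (p ^ k)%N.
have n0 : (0 < n)%N by rewrite expn_gt0 prime_gt0.
set z := n.-root (-1).
have zn : z ^+ n = -1 by rewrite /z rootCK.
have wn1 : (z ^+ 2) ^+ n = 1 by rewrite -exprM mulnC exprM zn sqrrN expr1n.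
have [m pm] := prim_order_exists n0 wn1.
case/(dvdn_pfactor _ _ pp) => j jk Dm.
have [jk'|kj] := ltnP j k; last first.
  have jeq : j = k by apply/eqP; rewrite eqn_leq jk kj.
  by rewrite /n -jeq -Dm.
have k1 : k = k.-1.+1 by rewrite prednK // (leq_ltn_trans _ jk').
have := @noprim p k.-1 pp; rewrite -k1 -/n -/z exprM.
have : (p ^ j %| p ^ k.-1)%N by rewrite dvdn_exp2l // -ltnS -k1.
by rewrite -Dm (prim_order_dvd pm) => /eqP -> ; rewrite eqxx.
Qed.

Set Implicit Arguments. Unset Strict Implicit. Unset Printing Implicit Defensive.

Section ZGbasic.
Variable gT : finGroupType.
Implicit Types (a b : ZG gT) (rho : gT -> algC).

Lemma jrho_sumf rho n (F : 'I_n -> ZG gT) :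
  jrho rho [ffun g => \sum_(i < n) F i g] = \sum_(i < n) jrho rho (F i).
Proof.
rewrite /jrho; under eq_bigr do rewrite ffunE rmorph_sum mulr_suml.
by rewrite exchange_big.
Qed.

Lemma jrhoD rho a b :
  jrho rho [ffun g => a g + b g] = jrho rho a + jrho rho b.
Proof.
by rewrite /jrho -big_split; apply: eq_bigr => g _; rewrite ffunE rmorphD mulrDl.
Qed.

Lemma jrhoN rho a : jrho rho [ffun g => - a g] = - jrho rho a.
Proof.
by rewrite /jrho -sumrN; apply: eq_bigr => g _; rewrite ffunE rmorphN mulNr.
Qed.

Lemma jrho0 rho : jrho rho [ffun _ => 0] = 0.
Proof. by rewrite /jrho big1 // => g _; rewrite ffunE mul0r. Qed.

Lemma jrho_delta rho h (c : int) :
  jrho rho [ffun g => (g == h)%:Z * c] = c%:~R * rho h.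
Proof.
rewrite /jrho (bigD1 h) //= big1 ?addr0; first by rewrite ffunE eqxx mul1r.
by move=> g /negbTE gh; rewrite ffunE gh mul0r mul0r.
Qed.

Lemma rep1 rho : is_rep rho -> rho 1%g = 1.
Proof.
case=> rM r0; apply: (mulfI (r0 1%g)); by rewrite -rM mulg1 mulr1.
Qed.

Lemma repX rho : is_rep rho -> forall x m, rho (x ^+ m)%g = rho x ^+ m.
Proof.
move=> rr x; elim=> [|m IH]; first by rewrite expg0 expr0 rep1.
by rewrite expgS exprS rr.1 IH.
Qed.

Lemma repV rho : is_rep rho -> forall x, rho x^-1%g = (rho x)^-1.
Proof.
move=> rr x; apply: (mulfI (rr.2 x)); rewrite -rr.1 mulgV rep1 // divff //.
exact: rr.2.
Qed.

Lemma rep_unity rho : is_rep rho -> forall x, rho x ^+ #|gT| = 1.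
Proof.
move=> rr x; rewrite -repX // -cardsT expg_cardG ?inE // rep1 //.
Qed.

Lemma jrho_mul rho : is_rep rho -> forall a b,
  jrho rho (zg_mul a b) = jrho rho a * jrho rho b.
Proof.
move=> rr a b; rewrite /jrho /zg_mul mulr_suml.
under eq_bigr do rewrite ffunE rmorph_sum mulr_suml.
rewrite exchange_big; apply: eq_bigr => h _.
rewrite (reindex_inj (mulgI h)) mulr_sumr; apply: eq_bigr => g _.
by rewrite mulKg rr.1 rmorphM; ring.
Qed.

Lemma sum_rep_inv rho (P : pred gT) y : is_rep rho -> rho y != 1 ->
  (forall x, P (y * x)%g = P x) -> \sum_(x | P x) rho x = 0.
Proof.
move=> rr ry1 Pinv; set S := \sum_(x | P x) rho x.
have : S = rho y * S.
  rewrite {1}/S (reindex_inj (mulgI y)) /S mulr_sumr.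
  by apply: eq_big => [x|x _]; [rewrite Pinv | rewrite rr.1].
move/eqP; rewrite -subr_eq0 -{1}[S]mul1r -mulrBl mulf_eq0 subr_eq0 eq_sym.
by rewrite (negbTE ry1) /= => /eqP.
Qed.

End ZGbasic.


Section RepStruct.
Variables (gT : finGroupType) (p e : nat).
Hypothesis pp : prime p.
Hypothesis cardG : #|gT| = (p ^ e)%N.
Variable rho : gT -> algC.
Hypothesis rr : is_rep rho.

Lemma rep_gen : exists g0, (p ^ level p rho)%N.-primitive_root (rho g0) /\
  (forall g, rho g ^+ (p ^ level p rho) = 1).
Proof.
have n0 : (0 < #|gT|)%N by rewrite cardG expn_gt0 prime_gt0.
have OP g : {m | m.-primitive_root (rho g) & (m %| #|gT|)%N}.
  exact: prim_order_exists n0 (rep_unity rr g).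
pose d g := s2val (OP g).
have dP g : (d g).-primitive_root (rho g) by rewrite /d; case: (OP g).
have dpow g : exists2 j, (j <= e)%N & d g = (p ^ j)%N.
  by apply/dvdn_pfactor => //; rewrite -cardG /d; case: (OP g).
case: (arg_maxnP d (isT : predT 1%g)) => g0 _ g0max.
have dd g : (d g %| d g0)%N.
  have [j _ Ej] := dpow g; have [j0 _ Ej0] := dpow g0.
  rewrite Ej Ej0 dvdn_exp2l // -(leq_exp2l _ _ (prime_gt1 pp)) -Ej -Ej0.
  exact: g0max.
have unity g : rho g ^+ d g0 = 1 by apply/eqP; rewrite -(prim_order_dvd (dP g)).
set N := d g0.
have N0 : (0 < N)%N by apply: prim_order_gt0 (dP g0).
set L := [seq rho g0 ^+ i | i <- iota 0 N].
have uL : uniq L.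
  rewrite map_inj_in_uniq ?iota_uniq // => i j; rewrite !mem_iota /= !add0n.
  move=> iN jN /eqP; rewrite (eq_prim_root_expr (dP g0)) !modn_small // => /eqP //.
have memL x : (x \in undup [seq rho g | g : gT]) = (x \in L).
  rewrite mem_undup; apply/imageP/mapP => [[g _ ->]|[i]].
    have [i ->] := prim_rootP (dP g0) (unity g).
    by exists (val i) => //; rewrite mem_iota add0n /=.
  by move=> _ ->; exists (g0 ^+ i)%g => //; rewrite repX.
have sz : size (undup [seq rho g | g : gT]) = N.
  rewrite (perm_size (uniq_perm (undup_uniq _) uL memL)) size_map size_iota //.
have [j0 _ Nj] := dpow g0.
have lv : level p rho = j0 by rewrite /level sz /N Nj pfactorK.
exists g0; rewrite lv -Nj; split => //.
Qed.

Let k := level p rho.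

Lemma rep_unity_k g : rho g ^+ (p ^ k) = 1.
Proof. by have [g0 [_ ->]] := rep_gen. Qed.

Lemma rep_pow_omega g : exists t, rho g = omega p k ^+ t.
Proof.
have [i ->] := prim_rootP (omega_prim p k pp) (rep_unity_k g); by exists i.
Qed.

Lemma omega_img : exists h, rho h = omega p k.
Proof.
have [g0 [pg0 _]] := rep_gen.
have [i Ei] := prim_rootP pg0 (prim_expr_order (omega_prim p k pp)).
by exists (g0 ^+ i)%g; rewrite repX.
Qed.

Lemma omega1_img : (0 < k)%N -> exists h, rho h = omega p 1.
Proof.
move=> k0; have [g0 [pg0 _]] := rep_gen.
have w1 : omega p 1 ^+ (p ^ k) = 1.
  rewrite -(prednK k0) expnS exprM.
  by rewrite -[p in omega p 1 ^+ p]expn1 (prim_expr_order (omega_prim p 1 pp)) expr1n.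
have [i Ei] := prim_rootP pg0 w1.
by exists (g0 ^+ i)%g; rewrite repX.
Qed.

Lemma level0_triv : k = 0%N -> forall g, rho g = 1.
Proof. by move=> k0 g; have := rep_unity_k g; rewrite k0 expn0 expr1. Qed.

Lemma triv_level0 : (forall g, rho g = 1) -> k = 0%N.
Proof.
move=> tr; have [g0 [pg0 _]] := rep_gen; move: (pg0); rewrite tr => p1.
have : (p ^ k %| 1)%N by rewrite (prim_order_dvd p1) expr1.
rewrite dvdn1 -(expn0 p) eqn_exp2l ?prime_gt1 // => /eqP //.
Qed.

Definition Zr (x : algC) := exists r : ZG gT, x = jrho rho r.

Lemma Zr_rho g : Zr (rho g).
Proof. by exists [ffun h => (h == g)%:Z * 1]; rewrite jrho_delta mul1r. Qed.

Lemma Zr_int (c : int) : Zr c%:~R.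
Proof.
by exists [ffun h => (h == 1%g)%:Z * c]; rewrite jrho_delta rep1 // mulr1.
Qed.

Lemma ZrD x y : Zr x -> Zr y -> Zr (x + y).
Proof. by move=> [a ->] [b ->]; exists [ffun g => a g + b g]; rewrite jrhoD. Qed.

Lemma ZrN x : Zr x -> Zr (- x).
Proof. by move=> [a ->]; exists [ffun g => - a g]; rewrite jrhoN. Qed.

Lemma ZrM x y : Zr x -> Zr y -> Zr (x * y).
Proof. by move=> [a ->] [b ->]; exists (zg_mul a b); rewrite jrho_mul. Qed.

Lemma Zr_sum I (r : seq I) (P : pred I) (F : I -> algC) :
  (forall i, P i -> Zr (F i)) -> Zr (\sum_(i <- r | P i) F i).
Proof.
move=> H; elim/big_ind: _ => //; first by rewrite -(mulr0z 1) ; apply: (Zr_int 0).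
exact: ZrD.
Qed.

Lemma ZrX x m : Zr x -> Zr (x ^+ m).
Proof.
move=> Zx; elim: m => [|m IH]; first by rewrite expr0 -(rep1 rr); apply: Zr_rho.
by rewrite exprS; apply: ZrM.
Qed.

Lemma Zr_inZomega x : Zr x <-> inZomega p k x.
Proof.
split.
  case=> a ->; rewrite /jrho.
  have tP g : {t : 'I_(p ^ k)%N | rho g = omega p k ^+ t}.
    by case: (prim_rootP (omega_prim p k pp) (rep_unity_k g)) => t Et; exists t.
  exists (p ^ k)%N, (fun i => \sum_(g | sval (tP g) == i) a g).
  rewrite (partition_big (fun g => sval (tP g)) predT) //=.
  apply: eq_bigr => i _; rewrite rmorph_sum mulr_suml; apply: eq_bigr => g /eqP Eg.
  by rewrite (svalP (tP g)) Eg.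
case=> m [c ->]; apply: Zr_sum => i _; apply: ZrM; first exact: Zr_int.
by apply: ZrX; have [h <-] := omega_img; apply: Zr_rho.
Qed.

End RepStruct.


Section Kernels.
Variables (gT : finGroupType) (p e : nat).
Hypothesis pp : prime p.
Hypothesis cardG : #|gT| = (p ^ e)%N.

Lemma rker_inE (rho : gT -> algC) g : (g \in rker rho) = (rho g == 1).
Proof. by rewrite inE. Qed.

Lemma eq_ker_val (s c : gT -> algC) : is_rep s -> is_rep c -> rker s = rker c ->
  forall g h, s g = s h -> c g = c h.
Proof.
move=> rs rc E g h sgh.
have : (g * h^-1)%g \in rker s by rewrite rker_inE rs.1 repV // sgh divff //; exact: rs.2.
rewrite E rker_inE rc.1 repV // => /eqP H.
by apply: (mulIf (invr_neq0 (rc.2 h))); rewrite H divff //; exact: rc.2.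
Qed.

Lemma same_ker_pow (s c : gT -> algC) : is_rep s -> is_rep c -> rker s = rker c ->
  exists m, coprime m p /\ forall g, c g = s g ^+ m.
Proof.
move=> rs rc E.
have [g0 [pg0 un]] := rep_gen pp cardG rs.
set k := level p s in pg0 un.
have [k0|kpos] := posnP k.
  exists 1%N; split; first by rewrite coprime1n.
  move=> g; rewrite expr1 (level0_triv pp cardG rs k0 g).
  have -> : c g = c 1%g.
    by apply: (eq_ker_val rs rc E); rewrite (level0_triv pp cardG rs k0 g) rep1.
  exact: rep1.
have cg0 : c g0 ^+ (p ^ k) = 1.
  rewrite -repX //; have -> : c (g0 ^+ (p ^ k))%g = c 1%g.
    by apply: (eq_ker_val rs rc E); rewrite repX // un rep1.
  exact: rep1.
have [m Em] := prim_rootP pg0 cg0.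
have cs g : c g = s g ^+ m.
  have [t Et] := prim_rootP pg0 (un g).
  have -> : c g = c (g0 ^+ t)%g by apply: (eq_ker_val rs rc E); rewrite repX.
  by rewrite repX // Em Et -!exprM mulnC.
exists m; split => //.
rewrite coprime_sym prime_coprime //; apply/negP => /dvdnP[q Dm].
have E' : rker c = rker s by [].
have : s (g0 ^+ (p ^ k.-1))%g = s 1%g.
  apply: (eq_ker_val rc rs (esym E)); rewrite repX // Em -exprM Dm rep1 //.
  rewrite -mulnA -expnS prednK // mulnC exprM un expr1n //.
rewrite repX // rep1 // => /eqP; rewrite -(prim_order_dvd pg0).
rewrite dvdn_Pexp2l ?prime_gt1 //.
by rewrite -ltnS prednK // ltnn.
Qed.

Lemma kill_same (s c : gT -> algC) (a : ZG gT) : is_rep s -> is_rep c ->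
  rker s = rker c -> jrho s a = 0 -> jrho c a = 0.
Proof.
move=> rs rc E ja.
have [m [cop cs]] := same_ker_pow rs rc E.
have cop' : coprime m #|gT| by rewrite cardG coprimeXr.
have [u Hu] := Qn_aut_exists cop'.
have : u (jrho s a) = jrho c a.
  rewrite /jrho rmorph_sum; apply: eq_bigr => g _.
  by rewrite rmorphM rmorph_int Hu ?(rep_unity rs) // cs.
by rewrite ja rmorph0 => <-.
Qed.

Lemma omega1_neq0 : omega p 1 != 0.
Proof.
apply/eqP => w0; have := prim_expr_order (omega_prim p 1 pp).
by rewrite w0 expr0n expn1 gtn_eqF ?prime_gt0 //= => /eqP; rewrite eq_sym oner_eq0.
Qed.

Lemma omega1_neq1 : omega p 1 != 1.
Proof.
apply/eqP => w1; have := omega_prim p 1 pp; rewrite w1 expn1 => pr.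
have : (p %| 1)%N by rewrite (prim_order_dvd pr) expr1.
by rewrite dvdn1 => /eqP p1; move: (prime_gt1 pp); rewrite p1.
Qed.

Lemma jb_expand (s rho : gT -> algC) xi : is_rep s -> is_rep rho ->
  (0 < level p rho)%N -> rho xi = omega p 1 ->
  jrho s (brho p rho) = (1 - s xi) * \sum_(x | rho x == 1) s x.
Proof.
move=> rs rr k0 rxi; rewrite /brho eqn0Ngt k0 /= /jrho.
have -> : \sum_g ([ffun x => (rho x == 1)%:Z - (rho x == omega p 1)%:Z] g)%:~R * s g
   = \sum_(g | rho g == 1) s g - \sum_(g | rho g == omega p 1) s g.
  rewrite !(big_mkcond (fun g => rho g == _)) -sumrB; apply: eq_bigr => g _.
  rewrite ffunE rmorphB /=.
  by case: (rho g == 1); case: (rho g == omega p 1); rewrite /= ?rmorph1 ?rmorph0 ?subrr ?mul0r ?subr0 ?sub0r ?mul1r ?mulN1r.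
rewrite [X in _ - X](reindex_inj (mulgI xi)) /=.
have -> : \sum_(x | rho (xi * x)%g == omega p 1) s (xi * x)%g
    = s xi * \sum_(x | rho x == 1) s x.
  rewrite mulr_sumr; apply: eq_big => [x|x _]; last by rewrite rs.1.
  by rewrite rr.1 rxi -{2}[omega p 1]mulr1 (inj_eq (mulfI omega1_neq0)).
by rewrite mulrBl mul1r.
Qed.

Lemma sum_ker_const (s rho : gT -> algC) : is_rep s -> is_rep rho ->
  (forall y, rho y = 1 -> s y = 1) -> \sum_(x | rho x == 1) s x = #|rker rho|%:R.
Proof.
move=> rs rr H; rewrite (eq_bigr (fun _ => 1)); last by move=> x /eqP /H.
by rewrite sumr_const; congr (_ *+ _); apply: eq_card => x; rewrite inE.
Qed.

Lemma jb_self (rho : gT -> algC) : is_rep rho ->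
  jrho rho (brho p rho) = if level p rho == 0%N then #|gT|%:R
                           else #|rker rho|%:R * (1 - omega p 1).
Proof.
move=> rr; case: ifP => [/eqP k0|/negbT k0]; last rewrite -lt0n in k0.
  rewrite /brho k0 eqxx /jrho (eq_bigr (fun _ => 1)); last first.
    by move=> g _; rewrite ffunE mul1r (level0_triv pp cardG rr k0).
  by rewrite sumr_const.
have [xi rxi] := omega1_img pp cardG rr k0.
by rewrite (jb_expand rr rr k0 rxi) rxi (sum_ker_const rr rr) // mulrC.
Qed.

Lemma jb_zero (s rho : gT -> algC) : is_rep s -> is_rep rho ->
  rker s != rker rho -> jrho s (brho p rho) = 0.
Proof.
move=> rs rr E.
have [k0|k0] := posnP (level p rho).
  rewrite /brho k0 eqxx /jrho (eq_bigr (fun g => s g)); last first.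
    by move=> g _; rewrite ffunE mul1r.
  have [y sy] : exists y, s y != 1.
    apply/existsP; apply: contraR E => /existsPn H; apply/eqP/setP => g.
    by rewrite !inE (level0_triv pp cardG rr k0) (negPn (H g)) eqxx.
  by apply: (sum_rep_inv (P := predT) rs sy).
have [xi rxi] := omega1_img pp cardG rr k0.
rewrite (jb_expand rs rr k0 rxi).
have [/existsP [y /andP[/eqP ry sy]] | /existsPn H] :=
  boolP [exists y, (rho y == 1) && (s y != 1)].
  rewrite (sum_rep_inv (P := fun x => rho x == 1) rs sy) ?mulr0 //.
  by move=> x; rewrite rr.1 ry mul1r.
have {}H y : rho y = 1 -> s y = 1.
  by move=> ry; have := H y; rewrite ry eqxx /= => /negPn/eqP.
have [/eqP sxi|sxi] := boolP (s xi == 1); first by rewrite sxi subrr mul0r.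
exfalso; move/negP: E; apply; apply/eqP/setP => g; rewrite !inE.
apply/idP/idP; last by move=> /eqP /H ->.
move=> /eqP sg; apply: contraR sxi => rg1.
have u := rep_unity_k pp cardG rr g.
have n0 : (0 < p ^ level p rho)%N by rewrite expn_gt0 prime_gt0.
have [d pd dd] := prim_order_exists n0 u.
have [j _ Dd] := (dvdn_pfactor _ _ pp dd).
have j0 : (0 < j)%N.
  rewrite lt0n; apply: contra rg1 => /eqP j0; move: pd; rewrite Dd j0 expn0 => pd.
  by have := prim_expr_order pd; rewrite expr1 => ->.
have pdv : (p %| d)%N by rewrite Dd -(prednK j0) expnS dvdn_mulr.
have pz := dvdn_prim_root pd pdv.
have w1 : omega p 1 ^+ p = 1.
  by rewrite -{2}(expn1 p) (prim_expr_order (omega_prim p 1 pp)).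
have [i Ei] := prim_rootP pz w1.
have : rho (xi^-1 * g ^+ (d %/ p * i))%g = 1.
  by rewrite rr.1 repV // repX // exprM -Ei rxi mulVf // omega1_neq0.
move/H; rewrite rs.1 repV // repX // sg expr1n mulr1 => /eqP.
by rewrite invr_eq1.
Qed.

End Kernels.


Section Fourier.
Variable gT : finGroupType.
Hypothesis abG : abelian [set: gT].
Let G := [set: gT]%G.

Lemma comm_all (x y : gT) : commute x y.
Proof. exact: (centsP abG) x (in_setT x) y (in_setT y). Qed.

Lemma irr_lin (t : Iirr G) : 'chi_t \is a linear_char.
Proof. by move/char_abelianP: abG => H; apply: H. Qed.

Lemma irr_rep (t : Iirr G) : is_rep (fun x => 'chi_t x).
Proof.
split => [x y|x]; first by rewrite (lin_charM (irr_lin t)) ?in_setT.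
by rewrite (lin_char_neq0 (irr_lin t)) ?in_setT.
Qed.

Lemma class_ab (g h : gT) : (g \in h ^: G)%g = (g == h).
Proof.
apply/idP/eqP => [|->]; last exact: class_refl.
case/imsetP => z _ ->; rewrite conjgE (comm_all h z) mulKg //.
Qed.

Lemma cent_ab (h : gT) : #|('C_G[h])%g| = #|gT|.
Proof.
rewrite (setIidPl _) ?cardsT // sub_cent1; apply: (subsetP abG); exact: in_setT.
Qed.

Lemma fourier (a : ZG gT) h :
  #|gT|%:R * (a h)%:~R = \sum_(t : Iirr G) jrho (fun x => 'chi_t x) a * ('chi_t h)^*.
Proof.
rewrite /jrho; under eq_bigr do rewrite mulr_suml.
rewrite exchange_big /= (bigD1 h) //= [X in _ + X]big1 ?addr0.
  under eq_bigr do rewrite -mulrA.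
  rewrite -mulr_sumr second_orthogonality_relation ?in_setT // class_ab eqxx.
  by rewrite cent_ab mulr1n mulrC.
move=> g gh; under eq_bigr do rewrite -mulrA.
by rewrite -mulr_sumr second_orthogonality_relation ?in_setT // class_ab (negbTE gh) mulr0n mulr0.
Qed.

End Fourier.


Section Fiber.
Variable gT : finGroupType.
Variable rho : gT -> algC.
Hypothesis rr : is_rep rho.
Variables (g0 : gT) (N : nat).
Hypothesis pg0 : N.-primitive_root (rho g0).
Hypothesis un : forall g, rho g ^+ N = 1.

Lemma exp_uniq (s t : nat) : (s < N)%N -> (t < N)%N ->
  rho g0 ^+ s = rho g0 ^+ t -> s = t.
Proof.
move=> sN tN /eqP; rewrite (eq_prim_root_expr pg0) !modn_small // => /eqP //.
Qed.

Lemma fiber (Phi : gT -> algC) :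
  (forall g x, rho x = 1 -> Phi (g * x)%g = Phi g) ->
  \sum_g Phi g = #|rker rho|%:R * \sum_(t < N) Phi (g0 ^+ t)%g.
Proof.
move=> Pinv.
have tP g : {t : 'I_N | rho g = rho g0 ^+ t}.
  by case: (prim_rootP pg0 (un g)) => t Et; exists t.
pose tau g := sval (tP g).
have tauE g : rho g = rho g0 ^+ tau g by rewrite /tau; case: (tP g).
rewrite (partition_big tau predT) //= mulr_sumr; apply: eq_bigr => t _.
have -> : \sum_(g | tau g == t) Phi g = \sum_(g | tau g == t) Phi (g0 ^+ t)%g.
  apply: eq_bigr => g /eqP Et.
  have -> : g = (g0 ^+ t * ((g0 ^+ t)^-1 * g))%g by rewrite mulKVg.
  rewrite Pinv // rr.1 repV // repX // -Et -tauE mulVf //; exact: rr.2.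
rewrite sumr_const mulr_natl; congr (_ *+ _).
rewrite -(card_lcoset _ (g0 ^+ t)%g); apply: eq_card => g.
rewrite mem_lcoset rker_inE rr.1 repV // repX // (tauE g).
have nz : rho g0 ^+ t != 0 by rewrite -repX //; exact: rr.2.
rewrite -[g \in _]/(tau g == t).
apply/eqP/eqP => [<-|E]; first by rewrite mulVf // -repX //; exact: rr.2.
apply: val_inj; apply: exp_uniq; [exact: ltn_ord | exact: ltn_ord |].
by apply/eqP; rewrite -(inj_eq (mulfI (invr_neq0 nz))) E mulVf.
Qed.

End Fiber.


Section Core.
Variables (gT : finGroupType) (p e : nat).
Hypothesis pp : prime p.
Hypothesis cardG : #|gT| = (p ^ e)%N.
Hypothesis abG : abelian [set: gT].
Variable rho : gT -> algC.
Hypothesis rr : is_rep rho.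
Variable a : ZG gT.
Hypothesis kills : forall c, is_rep c -> rker c != rker rho -> jrho c a = 0.

Let G := [set: gT]%G.

Lemma cardG_neq0 : (#|gT|%:R : algC) != 0.
Proof. by rewrite pnatr_eq0 -lt0n cardG expn_gt0 prime_gt0. Qed.

Lemma chi_term (t : Iirr G) :
  jrho (fun x => 'chi_t x) a = 0 \/ rker (fun x => 'chi_t x) = rker rho.
Proof.
have [E|E] := eqVneq (rker (fun x => 'chi_t x)) (rker rho); first by right.
by left; apply: kills => //; exact: irr_rep.
Qed.

Lemma a_Kinv h x : rho x = 1 -> a (h * x)%g = a h.
Proof.
move=> rx; apply: (@intr_inj algC); apply: (mulfI cardG_neq0).
rewrite !fourier //; apply: eq_bigr => t _.
have [->|E] := chi_term t; first by rewrite !mul0r.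
have cx : 'chi_t x = 1.
  by apply/eqP; rewrite -[_ == 1](rker_inE (fun y => 'chi_t y)) E rker_inE rx.
by rewrite (irr_rep abG t).1 cx mulr1.
Qed.

Lemma a_coset h y : rho y != 1 -> rho y ^+ p = 1 ->
  \sum_(l < p) a (h * y ^+ l)%g = 0.
Proof.
move=> ry1 ryp; apply: (@intr_inj algC); apply: (mulfI cardG_neq0).
rewrite rmorph_sum mulr_sumr mulr0.
under eq_bigr do rewrite fourier //.
rewrite exchange_big big1 // => t _.
have [->|E] := chi_term t; first by rewrite big1 // => l _; rewrite mul0r.
rewrite -mulr_sumr.
have rc := irr_rep abG t.
set c := 'chi_t y.
have c1 : c != 1.
  apply/negP => /eqP cy; move/negP: ry1; apply.
  by rewrite -[_ == 1](rker_inE rho) -E rker_inE -/c cy.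
have cp : c ^+ p = 1.
  apply/eqP; rewrite /c -(repX rc) -[_ == 1](rker_inE (fun y => 'chi_t y)) E.
  by rewrite rker_inE repX // ryp.
have -> : \sum_(l < p) ('chi_t (h * y ^+ l)%g)^* = ('chi_t h)^* * \sum_(l < p) (c^*) ^+ l.
  rewrite mulr_sumr; apply: eq_bigr => l _.
  by rewrite rc.1 (repX rc) rmorphM rmorphXn.
have : (c^* - 1) * \sum_(l < p) (c^*) ^+ l = 0.
  by rewrite -subrX1 -rmorphXn cp rmorph1 subrr.
move/eqP; rewrite mulf_eq0 subr_eq0 => /orP[/eqP cc|/eqP ->]; last by rewrite !mulr0.
by move: c1; rewrite -(conjCK c) cc rmorph1 eqxx.
Qed.

Lemma core : exists r : ZG gT, jrho rho a = jrho rho (brho p rho) * jrho rho r.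
Proof.
rewrite (jb_self pp cardG rr).
case: ifP => [/eqP k0|/negbT k0]; last rewrite -lt0n in k0.
  have triv := level0_triv pp cardG rr k0.
  exists [ffun g => (g == 1%g)%:Z * a 1%g]; rewrite jrho_delta rep1 // mulr1.
  rewrite /jrho (eq_bigr (fun _ => (a 1%g)%:~R)); last first.
    move=> g _; rewrite triv mulr1; congr (_%:~R).
    by have := a_Kinv 1%g (triv g); rewrite mul1g.
  by rewrite sumr_const mulr_natl.
have [g0 [pg0 un]] := rep_gen pp cardG rr.
set k := level p rho in pg0 un k0.
set N := (p ^ k)%N in pg0 un.
set M := (p ^ k.-1)%N.
have NM : N = (M * p)%N by rewrite /N /M -expnSr prednK.
have M0 : (0 < M)%N by rewrite expn_gt0 prime_gt0.
set v := rho g0.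
set w := v ^+ M.
set xi' := (g0 ^+ M)%g.
have rxi' : rho xi' = w by rewrite /xi' repX.
have w1 : w != 1.
  rewrite /w -(prim_order_dvd pg0) NM; apply/negP => /(dvdn_leq M0).
  by rewrite -{2}(muln1 M) leq_pmul2l // leqNgt (prime_gt1 pp).
have wp : w ^+ p = 1 by rewrite /w -exprM -NM (prim_expr_order pg0).
have [xi rxi] := omega1_img pp cardG rr k0.
have wp1 : w ^+ (p ^ 1) = 1 by rewrite expn1.
have [u Eu] := prim_rootP (omega_prim p 1 pp) wp1.
have tP g : {t : 'I_N | rho g = v ^+ t}.
  by case: (prim_rootP pg0 (un g)) => t Et; exists t.
pose tau g := val (sval (tP g)).
have tauE g : rho g = v ^+ tau g by rewrite /tau; case: (tP g).
have tauN g : (tau g < N)%N by rewrite /tau; case: (tP g) => t /= _; exact: ltn_ord.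
pose f g := v ^+ (tau g %% M).
pose q g := (tau g %/ M)%N.
have rhoE g : rho g = f g * w ^+ q g.
  by rewrite tauE {1}(divn_eq (tau g) M) exprD mulrC /w -exprM mulnC.
have vnz : v != 0 by apply: rr.2.
have finv g : f (g * xi')%g = f g.
  have : v ^+ tau (g * xi')%g = v ^+ (tau g + M).
    by rewrite -tauE rr.1 rxi' tauE exprD.
  move/eqP; rewrite (eq_prim_root_expr pg0) => /eqP E.
  rewrite /f; congr (v ^+ _).
  have MdN : (M %| N)%N by rewrite NM dvdn_mulr.
  by rewrite -(@modn_dvdm N (tau (g * xi')%g) M MdN) E (@modn_dvdm N _ M MdN) modnDr.
have C2 : \sum_g (a g)%:~R * f g = 0.
  set S := \sum_g (a g)%:~R * f g.
  have pS : p%:R * S = 0.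
    have -> : p%:R * S = \sum_(l < p) S by rewrite sumr_const card_ord mulr_natl.
    have -> : \sum_(l < p) S = \sum_(l < p) \sum_g (a (g * xi' ^+ l)%g)%:~R * f g.
      apply: eq_bigr => l _; rewrite /S (reindex_inj (mulIg (xi' ^+ l)%g)).
      apply: eq_bigr => g _; congr (_ * _).
      elim: (nat_of_ord l) => [|l' IH]; first by rewrite expg0 mulg1.
      by rewrite expgSr mulgA finv.
    rewrite exchange_big big1 // => g _.
    by rewrite -mulr_suml -rmorph_sum a_coset ?rxi' // mul0r.
  by move/eqP: pS; rewrite mulf_eq0 pnatr_eq0 (negbTE (lt0n_neq0 (prime_gt0 pp))) => /eqP.
have step1 : jrho rho a = \sum_g (a g)%:~R * (f g * (w ^+ q g - 1)).
  transitivity (\sum_g (a g)%:~R * rho g - \sum_g (a g)%:~R * f g).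
    by rewrite C2 subr0.
  rewrite -sumrB; apply: eq_bigr => g _; rewrite rhoE; ring.
have wE : w - 1 = (omega p 1 - 1) * \sum_(s < u) omega p 1 ^+ s by rewrite Eu subrX1.
pose E g := f g * (\sum_(s < u) omega p 1 ^+ s) * (\sum_(s < q g) w ^+ s).
have step2 : jrho rho a = (omega p 1 - 1) * \sum_g (a g)%:~R * E g.
  rewrite step1 mulr_sumr; apply: eq_bigr => g _; rewrite subrX1 wE /E; ring.
have tinv g x : rho x = 1 -> tau (g * x)%g = tau g.
  move=> rx; apply: (exp_uniq pg0 (tauN _) (tauN _)).
  by rewrite -!tauE rr.1 rx mulr1.
have Phinv g x : rho x = 1 -> (a (g * x)%g)%:~R * E (g * x)%g = (a g)%:~R * E g.
  by move=> rx; rewrite a_Kinv // /E /f /q tinv.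
have ZY : Zr rho (- \sum_(t < N) (a (g0 ^+ t)%g)%:~R * E (g0 ^+ t)%g).
  apply: ZrN; apply: (Zr_sum rr) => t _; apply: (ZrM rr); first by apply: (Zr_int rr).
  rewrite /E; apply: (ZrM rr); [apply: (ZrM rr)|].
  - by rewrite /f; apply: (ZrX rr); exact: Zr_rho.
  - by apply: (Zr_sum rr) => s _; apply: (ZrX rr); rewrite -rxi; exact: Zr_rho.
  - by apply: (Zr_sum rr) => s _; apply: (ZrX rr); rewrite -rxi'; exact: Zr_rho.
case: ZY => r Er; exists r; rewrite -Er step2.
rewrite (fiber rr pg0 un (Phi := fun g => (a g)%:~R * E g)) //; ring.
Qed.

End Core.


Lemma zg_mulDl (gT : finGroupType) (r1 r2 b : ZG gT) g :
  zg_mul [ffun h => r1 h + r2 h] b g = zg_mul r1 b g + zg_mul r2 b g.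
Proof. by rewrite !ffunE -big_split; apply: eq_bigr => h _; rewrite ffunE mulrDl. Qed.

Lemma zg_mulNl (gT : finGroupType) (r b : ZG gT) g :
  zg_mul [ffun h => - r h] b g = - zg_mul r b g.
Proof. by rewrite !ffunE -sumrN; apply: eq_bigr => h _; rewrite ffunE mulNr. Qed.

Lemma zg_mul0l (gT : finGroupType) (b : ZG gT) g :
  zg_mul [ffun _ => 0] b g = 0.
Proof. by rewrite ffunE big1 // => h _; rewrite ffunE mul0r. Qed.

Theorem mainTheorem3 (gT : finGroupType) (p e : nat)
  (pp : prime p) (e_ge1 : (1 <= e)%N)
  (abG : abelian [set: gT]) (cardG : #|gT| = (p ^ e)%N)
  (n : nat) (reps : 'I_n -> gT -> algC)
  (reps_rep : forall i, is_rep (reps i))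
  (reps_inequiv : forall i j, rker (reps i) = rker (reps j) -> i = j)
  (reps_cover : forall rho : gT -> algC, is_rep rho ->
                  exists i, rker rho = rker (reps i)) :
  let C := fun s : 'I_n -> algC =>
    exists a : ZG gT, in_b_ideal p reps a /\ forall i, s i = jrho (reps i) a in
  [/\ is_S_ideal p reps C,
      (forall s, C s -> in_R_image reps s) &
      forall I, is_S_ideal p reps I -> (forall s, I s -> in_R_image reps s) ->
        forall s, I s -> C s].
Proof.
move=> C.
pose b i := brho p (reps i).
pose c j := jrho (reps j) (b j).
have diag i j : jrho (reps j) (b i) = if i == j then c j else 0.
  case: eqP => [->//|ij]; apply: (jb_zero pp cardG (reps_rep j) (reps_rep i)).
  by apply/eqP => E; apply: ij; apply: reps_inequiv; rewrite E.
have jbi j (r : 'I_n -> ZG gT) :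
    jrho (reps j) [ffun g => \sum_(i < n) zg_mul (r i) (b i) g] = jrho (reps j) (r j) * c j.
  rewrite jrho_sumf (bigD1 j) //= big1 ?addr0.
    by rewrite jrho_mul ?diag ?eqxx.
  by move=> i /negbTE ij; rewrite jrho_mul ?diag ?ij ?mulr0.
have ZrS i x : Zr (reps i) x <-> inZomega p (level p (reps i)) x.
  exact: (Zr_inZomega pp cardG (reps_rep i) x).
have Cchar s : C s <-> exists r : 'I_n -> ZG gT, forall j, s j = jrho (reps j) (r j) * c j.
  split.
    case=> a [[r Ea] Es]; exists r => j; by rewrite Es Ea jbi.
  case=> r Es; exists [ffun g => \sum_(i < n) zg_mul (r i) (b i) g]; split.
    by exists r.
  by move=> j; rewrite jbi.
split.
- split.
  + move=> s /Cchar [r Es] i; apply/ZrS; rewrite Es; apply: (ZrM (reps_rep i)).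
      by exists (r i).
    by exists (b i).
  + by apply/Cchar; exists (fun _ => [ffun _ => 0]) => j; rewrite jrho0 mul0r.
  + move=> s t /Cchar[r1 E1] /Cchar[r2 E2]; apply/Cchar.
    by exists (fun i => [ffun g => r1 i g + r2 i g]) => j; rewrite jrhoD E1 E2 mulrDl.
  + move=> s /Cchar[r1 E1]; apply/Cchar.
    by exists (fun i => [ffun g => - r1 i g]) => j; rewrite jrhoN E1 mulNr.
  + move=> s t /Cchar[r Es] tS.
    have : forall i, exists x, t i = jrho (reps i) x.
      by move=> i; have [x ->] := (ZrS i (t i)).2 (tS i); exists x.
    case/fin_all_exists => x Ex; apply/Cchar.
    by exists (fun i => zg_mul (x i) (r i)) => j; rewrite Ex Es jrho_mul // mulrA.
- by move=> s [a [_ Es]]; exists a.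
move=> I [IS I0 ID IN IM] HR s Is.
have key i : exists r, s i = jrho (reps i) r * c i.
  pose t := fun j : 'I_n => if j == i then (1 : algC) else 0.
  have tS : inS p reps t.
    move=> j; rewrite /t; case: eqP => _.
      by exists 1%N, (fun _ => 1); rewrite big_ord1 expr0 mulr1.
    by exists 0%N, (fun _ => 0); rewrite big_ord0.
  have [a Ea] := HR _ (IM _ _ Is tS).
  have kills : forall c', is_rep c' -> rker c' != rker (reps i) -> jrho c' a = 0.
    move=> c' rc ne; have [j Ej] := reps_cover c' rc.
    have ji : j != i by apply: contra ne => /eqP ji; rewrite Ej ji.
    apply: (kill_same pp cardG (reps_rep j) rc (esym Ej)).
    by rewrite -Ea /t (negbTE ji) mul0r.
  have [r Er] := core pp cardG abG (reps_rep i) kills.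
  exists r; rewrite mulrC -Er -Ea /t eqxx mul1r //.
case/fin_all_exists: key => r Er; apply/Cchar; by exists r.
Qed.
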